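(* Let $(X,S)$ be an association scheme, fix $x\in X$, and let $K$ be a field of positive characteristic $p$. Suppose that $p$ divides the valency $n_s$ for some $s\in S$. Then the Terwilliger algebra $KT(x)$ is not semisimple.
   Context: An association scheme $(X,S)$ consists of a finite set $X$ and a partition $S$ of $X\times X$ such that: (1) $1:=\{(x,x)\mid x\in X\}\in S$; (2) for $s\in S$, $s^*:=\{(y,x)\mid (x,y)\in s\}\in S$; (3) for $s,t,u\in S$ there is a nonnegative integer $p_{st}^u$ with $p_{st}^u=|xs\cap ty|$ whenever $(x,y)\in u$, where $xs=\{y\mid (x,y)\in s\}$ and $ty=\{z\mid (z,y)\in t\}$. The valency of $s\in S$ is $n_s:=p_{ss^*}^1=|xs|$ (independent of $x$). For $s\subseteq X\times X$ the adjacency matrix $\sigma_s$ has $(y,z)$-entry $1$ if $(y,z)\in s$ and $0$ otherwise. Fixing $x\in X$, for $s\in S$ let $E_s^*$ be the diagonal $0/1$ matrix whose $(y,y)$-entry is $1$ iff $y\in xs$. For a field $K$, $KT(x)$ is the $K$-subalgebra of $\mathrm{M}_X(K)$ generated by $\{E_s^*\sigma_tE_u^*\mid s,t,u\in S\}$ (matrices regarded over $K$). *)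

(* Defs.v *)
From mathcomp Require Import all_boot all_algebra.
Set Implicit Arguments. Unset Strict Implicit. Unset Printing Implicit Defensive.
Import GRing.Theory.
Local Open Scope ring_scope.

Section AS.
Variable X : finType.

Definition diag_rel : {set X * X} := [set u | u.1 == u.2].
Definition transp_rel (s : {set X * X}) : {set X * X} := [set u | (u.2, u.1) \in s].

Definition nbr (x : X) (s : {set X * X}) : {set X} := [set y | (x, y) \in s].

Definition is_assoc_scheme (S : {set {set X * X}}) : Prop :=
  [/\ partition S [set: X * X],
      diag_rel \in S,
      (forall s, s \in S -> transp_rel s \in S) &
      (forall s t u, s \in S -> t \in S -> u \in S ->
         exists c : nat, forall x y, (x, y) \in u ->
           #|[set z | ((x, z) \in s) && ((z, y) \in t)]| = c)].

(* valency n_s, computed at the base point x (independent of x) *)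
Definition valency (x : X) (s : {set X * X}) : nat := #|nbr x s|.

Variable K : fieldType.

Definition adjmx (s : {set X * X}) : 'M[K]_#|X| :=
  \matrix_(i, j) ((enum_val i, enum_val j) \in s)%:R.

Definition dualidem (x : X) (s : {set X * X}) : 'M[K]_#|X| :=
  \matrix_(i, j) ((i == j) && (enum_val i \in nbr x s))%:R.

Definition is_subalgebra (P : 'M[K]_#|X| -> Prop) : Prop :=
  [/\ P 0, P 1,
      (forall A B, P A -> P B -> P (A + B)),
      (forall (c : K) A, P A -> P (c *: A)) &
      (forall A B, P A -> P B -> P (A * B))].

(* the K-subalgebra generated by E*_s sigma_t E*_u, s,t,u in S *)
Definition terwilliger (S : {set {set X * X}}) (x : X) (M : 'M[K]_#|X|) : Prop :=
  forall P, is_subalgebra P ->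
    (forall s t u, s \in S -> t \in S -> u \in S ->
       P (dualidem x s * adjmx t * dualidem x u)) -> P M.

End AS.

Section SS.
Variables (K : fieldType) (n : nat).

Definition is_ideal (A I : 'M[K]_n -> Prop) : Prop :=
  (forall M, I M -> A M) /\ I 0 /\
      (forall M N, I M -> I N -> I (M + N)) /\
      (forall (c : K) M, I M -> I (c *: M)) /\
      (forall a M, A a -> I M -> I (a * M)) /\
      (forall a M, A a -> I M -> I (M * a)).

Definition nilpotent_set (I : 'M[K]_n -> Prop) : Prop :=
  exists k : nat, (0 < k)%N /\
    forall f : 'I_k -> 'M[K]_n, (forall i, I (f i)) -> \prod_(i < k) f i = 0.

(* A finite-dimensional algebra is semisimple iff its Jacobson radical
   (= the largest nilpotent two-sided ideal) is zero *)
Definition semisimple_alg (A : 'M[K]_n -> Prop) : Prop :=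
  forall I, is_ideal A I -> nilpotent_set I -> forall M, I M -> M = 0.
End SS.

(* Main.v *)
Require Import Defs.
From mathcomp Require Import all_boot all_algebra.
Set Implicit Arguments. Unset Strict Implicit. Unset Printing Implicit Defensive.
Import GRing.Theory.
Local Open Scope ring_scope.

Definition inW (X : finType) (K : fieldType) (S : {set {set X * X}}) (x : X)
  (w : 'cV[K]_#|X|) : Prop :=
  forall i j, (exists2 b, b \in S & ((x, enum_val i) \in b) && ((x, enum_val j) \in b)) ->
    w i 0 = w j 0.

Lemma sum_ev (X : finType) (K : fieldType) (F : X -> K) :
  \sum_(j < #|X|) F (enum_val j) = \sum_y F y.
Proof.
rewrite (reindex (@enum_rank X)) /=.
  by apply: eq_bigr => y _; rewrite enum_rankK.
by exists enum_val => y _; [apply: enum_rankK | apply: enum_valK].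
Qed.

Lemma card_ev (X : finType) (K : fieldType) (P : pred X) :
  \sum_(j < #|X|) (P (enum_val j))%:R = #|P|%:R :> K.
Proof.
rewrite (sum_ev (fun y => (P y)%:R)) -sum1_card natr_sum big_mkcond /=.
rewrite [RHS]big_mkcond; apply: eq_bigr => y _.
by rewrite unfold_in /=; case: (P y).
Qed.

Lemma sum_const_on (K : fieldType) n (w : 'cV[K]_n) (Q : pred 'I_n) j0 :
  (forall j, Q j -> w j 0 = w j0 0) ->
  \sum_j (Q j)%:R * w j 0 = (\sum_j (Q j)%:R) * w j0 0.
Proof.
move=> H; rewrite mulr_suml; apply: eq_bigr => j _.
by case: (boolP (Q j)) => Hq; [rewrite H | rewrite !mul0r].
Qed.

Lemma dual_mull (X : finType) (K : fieldType) x s (A : 'M[K]_#|X|) i j :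
  (dualidem K x s * A) i j = (enum_val i \in nbr x s)%:R * A i j.
Proof.
rewrite -mulmxE mxE (bigD1 i) //= big1 ?addr0; first by rewrite mxE eqxx.
by move=> k /negbTE Hk; rewrite mxE eq_sym Hk /= mul0r.
Qed.

Lemma dual_mulr (X : finType) (K : fieldType) x s (A : 'M[K]_#|X|) i j :
  (A * dualidem K x s) i j = A i j * (enum_val j \in nbr x s)%:R.
Proof.
rewrite -mulmxE mxE (bigD1 j) //= big1 ?addr0; first by rewrite mxE eqxx.
by move=> k /negbTE Hk; rewrite mxE Hk /= mulr0.
Qed.

Lemma gen_entry (X : finType) (K : fieldType) (x : X) (a t b : {set X * X}) i j :
  (dualidem K x a * adjmx K t * dualidem K x b) i j =
  (((enum_val i \in nbr x a) && ((enum_val i, enum_val j) \in t))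
     && (enum_val j \in nbr x b))%:R.
Proof. by rewrite dual_mulr dual_mull mxE -!natrM !mulnb. Qed.

Lemma same_block (X : finType) (S : {set {set X * X}}) a c u v :
  trivIset S -> a \in S -> c \in S -> u \in c -> v \in c -> (u \in a) = (v \in a).
Proof.
move=> tI aS cS uc vc; apply/idP/idP => H.
  by have -> : a = c by rewrite -(def_pblock tI aS H) (def_pblock tI cS uc).
by have -> : a = c by rewrite -(def_pblock tI aS H) (def_pblock tI cS vc).
Qed.

Lemma T_sub (X : finType) (K : fieldType) (S : {set {set X * X}}) (x : X) :
  is_subalgebra (@terwilliger X K S x).
Proof.
split.
- by move=> P [H0 _ _ _ _] _.
- by move=> P [_ H1 _ _ _] _.
- move=> A B HA HB P HP Hg; case: (HP) => _ _ HD _ _; apply: HD; [exact: HA HP Hg | exact: HB HP Hg].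
- move=> c A HA P HP Hg; case: (HP) => _ _ _ HZ _; apply: HZ; exact: HA HP Hg.
- move=> A B HA HB P HP Hg; case: (HP) => _ _ _ _ HM; apply: HM; [exact: HA HP Hg | exact: HB HP Hg].
Qed.

Lemma T_gen (X : finType) (K : fieldType) (S : {set {set X * X}}) (x : X) s t u :
  s \in S -> t \in S -> u \in S ->
  @terwilliger X K S x (dualidem K x s * adjmx K t * dualidem K x u).
Proof. by move=> sS tS uS P _ Hg; apply: Hg. Qed.

Lemma F1 (X : finType) (K : fieldType) (S : {set {set X * X}}) (x : X) :
  is_assoc_scheme S ->
  forall A, @terwilliger X K S x A -> forall w, inW S x w -> inW S x (A *m w).
Proof.
move=> [/and3P [_ tI _] dS trS H4] A HA.
apply: (HA (fun A => forall w, inW S x w -> inW S x (A *m w))); first split.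
- by move=> w _ i j _; rewrite mul0mx !mxE.
- by move=> w Hw; rewrite mul1mx.
- by move=> A1 B HA1 HB w Hw i j Hb; move: (HA1 w Hw i j Hb) (HB w Hw i j Hb); rewrite mulmxDl !mxE => -> ->.
- by move=> c A1 HA1 w Hw i j Hb; move: (HA1 w Hw i j Hb); rewrite -scalemxAl !mxE => ->.
- by move=> A1 B HA1 HB w Hw; rewrite -mulmxE -mulmxA; apply: HA1; apply: HB.
move=> a t b aS tS bS w Hw i i' [c cS /andP [ic i'c]].
rewrite !mxE.
have Ea : (enum_val i \in nbr x a) = (enum_val i' \in nbr x a).
  by rewrite !inE; apply: (same_block tI aS cS ic i'c).
under eq_bigr do rewrite gen_entry.
under [RHS]eq_bigr do rewrite gen_entry.
rewrite -Ea; case Hia: (enum_val i \in nbr x a); last first.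
  by rewrite !big1 // => j _; rewrite /= mul0r.
rewrite /=.
case: (pickP (fun j : 'I_#|X| => enum_val j \in nbr x b)) => [j0 Hj0 | Hnone]; last first.
  by rewrite !big1 // => j _; rewrite Hnone andbF mul0r.
have Hc : forall j, (enum_val j \in nbr x b) -> w j 0 = w j0 0.
  move=> j Hj; apply: Hw; exists b => //; rewrite -!(in_set (fun y => (x, y) \in b)).
  by rewrite -/(nbr x b) Hj Hj0.
rewrite (@sum_const_on K _ w (fun j => ((enum_val i, enum_val j) \in t) && (enum_val j \in nbr x b)) j0); last first.
  by move=> j /andP [_ Hj]; apply: Hc.
rewrite (@sum_const_on K _ w (fun j => ((enum_val i', enum_val j) \in t) && (enum_val j \in nbr x b)) j0); last first.
  by move=> j /andP [_ Hj]; apply: Hc.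
congr (_ * _).
rewrite (card_ev K (fun y => ((enum_val i, y) \in t) && (y \in nbr x b))).
rewrite (card_ev K (fun y => ((enum_val i', y) \in t) && (y \in nbr x b))).
have [k Hk] := H4 t (transp_rel b) (transp_rel a) tS (trS b bS) (trS a aS).
have E : forall y, (x, y) \in a ->
    #|(fun z => ((y, z) \in t) && (z \in nbr x b))| = k.
  move=> y Hy; rewrite -(Hk y x); last by rewrite inE.
  by apply: eq_card; move=> z; rewrite !inE unfold_in /= inE.
have Hi' := Hia; rewrite Ea in Hi'.
rewrite inE in Hia; rewrite inE in Hi'.
by rewrite (E _ Hia) (E _ Hi').
Qed.

Definition ex (X : finType) (K : fieldType) (x : X) : 'cV[K]_#|X| :=
  \col_i (enum_val i == x)%:R.

Lemma ex_W (X : finType) (K : fieldType) (S : {set {set X * X}}) (x : X) :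
  is_assoc_scheme S -> inW S x (ex K x).
Proof.
move=> [/and3P [_ tI _] dS trS H4] i j [c cS /andP [ic jc]].
rewrite !mxE; have := same_block tI dS cS ic jc; rewrite !inE /=.
by rewrite eq_sym (eq_sym (enum_val j)) => ->.
Qed.

Lemma F2 (X : finType) (K : fieldType) (S : {set {set X * X}}) (x : X) s p :
  p \in [pchar K] -> s \in S -> (p %| valency x s)%N ->
  forall w : 'cV[K]_#|X|, inW S x w ->
  \sum_j (enum_val j \in nbr x s)%:R * w j 0 = 0.
Proof.
move=> pK sS dv w Hw.
case: (pickP (fun j : 'I_#|X| => enum_val j \in nbr x s)) => [j0 Hj0 | Hnone]; last first.
  by rewrite big1 // => j _; rewrite Hnone mul0r.
rewrite (@sum_const_on K _ w (fun j => enum_val j \in nbr x s) j0); last first.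
  move=> j Hj; apply: Hw; exists s => //.
  by rewrite -!(in_set (fun y => (x, y) \in s)) -/(nbr x s) Hj Hj0.
rewrite (card_ev K (fun y => y \in nbr x s)).
have -> : #|(fun y => y \in nbr x s)| = valency x s.
  by apply: eq_card => z; rewrite unfold_in.
by move: dv; rewrite (dvdn_pcharf pK) => /eqP ->; rewrite mul0r.
Qed.

Lemma M0_apply (X : finType) (K : fieldType) (x : X) (s : {set X * X}) (v : 'cV[K]_#|X|) i :
  ((dualidem K x (diag_rel X) * adjmx K s * dualidem K x s) *m v) i 0 =
  (x == enum_val i)%:R * \sum_j (enum_val j \in nbr x s)%:R * v j 0.
Proof.
rewrite mxE; under eq_bigr do rewrite gen_entry.
rewrite [enum_val i \in _]inE inE /=.
case: eqP => [<- | _]; last by rewrite mul0r big1 // => j _; rewrite mul0r.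
rewrite mul1r; apply: eq_bigr => j _; by rewrite !inE andbb.
Qed.

Theorem theorem3p4 (X : finType) (S : {set {set X * X}}) (x : X)
    (K : fieldType) (p : nat) :
  is_assoc_scheme S ->
  p \in [pchar K]%R ->
  (exists2 s, s \in S & (p %| valency x s)%N) ->
  ~ semisimple_alg (@terwilliger X K S x).
Proof.
move=> HS pK [s sS dv] Hss.
have [/and3P [/eqP cov tI n0] dS trS H4] := HS.
have [T0 T1 TD TZ TM] := T_sub K S x.
pose I := fun M => @terwilliger X K S x M /\
  (forall v, exists2 A, @terwilliger X K S x A & M *m v = A *m ex K x) /\
  (forall A, @terwilliger X K S x A -> M *m (A *m ex K x) = 0).
have Iid : is_ideal (@terwilliger X K S x) I.
  split; first by move=> M [].
  split.
    split=> //; split; first by move=> v; exists 0 => //; rewrite !mul0mx.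
    by move=> A _; rewrite mul0mx.
  split.
    move=> M N [TMM [IM KM]] [TN [IN KN]]; split; first exact: TD.
    split.
      move=> v; have [A TA EA] := IM v; have [B TB EB] := IN v.
      by exists (A + B); [exact: TD | rewrite !mulmxDl EA EB].
    by move=> A TA; rewrite mulmxDl KM // KN // addr0.
  split.
    move=> c M [TMM [IM KM]]; split; first exact: TZ.
    split.
      move=> v; have [A TA EA] := IM v.
      by exists (c *: A); [exact: TZ | rewrite -!scalemxAl EA].
    by move=> A TA; rewrite -scalemxAl KM // scaler0.
  split.
    move=> a M Ta [TMM [IM KM]]; split; first exact: TM.
    split.
      move=> v; have [A TA EA] := IM v.
      by exists (a * A); [exact: TM | rewrite -!mulmxE -!mulmxA EA].
    by move=> A TA; rewrite -mulmxE -mulmxA KM // mulmx0.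
  move=> a M Ta [TMM [IM KM]]; split; first exact: TM.
  split.
    move=> v; have [A TA EA] := IM (a *m v).
    by exists A => //; rewrite -mulmxE -mulmxA EA.
  by move=> A TA; rewrite -mulmxE -mulmxA [a *m _]mulmxA mulmxE KM //; exact: TM.
have Inil : nilpotent_set I.
  exists 2%N; split => // f Hf.
  rewrite !big_ord_recl big_ord0 mulr1.
  have [_ [_ K0]] := Hf ord0; have [_ [I1 _]] := Hf (lift ord0 ord0).
  apply/matrixP => i j.
  have [A TA EA] := I1 (delta_mx j 0).
  have := congr1 (fun m : 'M_(_, 1) => m i 0) (K0 A TA).
  rewrite -EA mulmxA -colE mulmxE => H.
  by move: H; rewrite !mxE.
pose M0 := dualidem K x (diag_rel X) * adjmx K s * dualidem K x s.
have IM0 : I M0.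
  split; first exact: T_gen.
  split.
    move=> v; exists ((\sum_j (enum_val j \in nbr x s)%:R * v j 0) *: (1 : 'M[K]_#|X|)); first exact: TZ.
    apply/matrixP => i k; rewrite [k]ord1 M0_apply -scalemxAl mul1mx !mxE.
    by rewrite mulrC eq_sym.
  move=> A TA; apply/matrixP => i k; rewrite [k]ord1 M0_apply.
  rewrite (F2 pK sS dv) ?mulr0 ?mxE //.
  by apply: (F1 HS TA); apply: ex_W.
have [y0 Hy0] : exists y0, y0 \in nbr x s.
  have [c Hc] := H4 s (transp_rel s) (diag_rel X) sS (trS s sS) dS.
  have s0 : s != set0 by apply: contraNneq n0 => <-.
  have [[x1 y1] H1] := set0Pn _ s0.
  have : (0 < #|[set z | ((x, z) \in s) && ((z, x) \in transp_rel s)]|)%N.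
    rewrite Hc; last by rewrite inE /= eqxx.
    rewrite -(Hc x1 x1); last by rewrite inE /= eqxx.
    by apply/card_gt0P; exists y1; rewrite !inE /= H1.
  move/card_gt0P => [z]; rewrite !inE /= => /andP [Hz _]; exists z; by rewrite inE.
have := Hss I Iid Inil M0 IM0.
move/matrixP => /(_ (enum_rank x) (enum_rank y0)).
rewrite gen_entry !mxE !enum_rankK !inE /= eqxx /=.
rewrite inE in Hy0; rewrite Hy0 => /eqP; by rewrite oner_eq0.
Qed.
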